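(* Let $K$ be a sequence of positive integers approaching $\infty$, let $s\ge2$ be an integer, let $\mathbf b\in\mathcal{F}_s$, and let $A_{\mathbf b}=\{n\in\mathbb{N}:\mathrm{LB}_s(K_n)=\mathbf b\}$. Then there are real numbers $\gamma_n=o(1)$ and $\widetilde\gamma_n=o(1)$ such that $n\in A_{\mathbf b}$ if and only if $$\log_\phi(\mathbf b\cdot\widehat F)+\gamma_n\le\{\mathfrak F^{-1}(K_n)\}<\log_\phi(\widetilde{\mathbf b}\cdot\widehat F)+\widetilde\gamma_n,$$ where $\widetilde\gamma_n=0$ if $\mathbf b$ is the largest block in $\mathcal{F}_s$.
   Context: $F$: $F_1=1,F_2=2,F_{n+2}=F_{n+1}+F_n$. Zeckendorf expansion: $m=\sum_{k=1}^M\epsilon(k)F_{M-k+1}$ uniquely with $\epsilon(k)\in\{0,1\}$, $\epsilon(1)=1$, $\epsilon(k)\epsilon(k+1)=0$; $\mathrm{LB}_s(m)=(\epsilon(1),\dots,\epsilon(s))$ if $M\ge s$. $\mathcal{F}_s$ ($s\ge2$) is the set of all $\mathrm{LB}_s(m)$, listed $\mathbf b_1,\dots,\mathbf b_\ell$ with $1+\mathbf b_k*F=\mathbf b_{k+1}*F$, $\mathbf b*F=\sum_{k=1}^s\mathbf b(k)F_{s-k+1}$; $\mathbf b_\ell$ is the largest block. $\mathbf b_{\ell+1}:=(1,0,1,0,\dots,1,0,1,1)$ if $s$ even, $(1,0,1,0,\dots,1,1,0)$ if $s$ odd (length $s$); $\widetilde{\mathbf b_k}:=\mathbf b_{k+1}$.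 $\omega=\phi^{-1}$, $\mathbf b\cdot\widehat F=\sum_k\mathbf b(k)\omega^{k-1}$. $\mathfrak F(x)=\frac{\phi}{\sqrt5}(\phi^x+\phi^{-x}\cos(\pi x)\phi^{-2})$, increasing on $[1,\infty)$ with inverse $\mathfrak F^{-1}$; $\{y\}$ is the fractional part. *)

(* Defs.v *)
From Stdlib Require Import Reals Lra Lia Arith List ClassicalEpsilon.
Open Scope R_scope.

(* Fibonacci numbers with F_1 = 1, F_2 = 2, F_{n+2} = F_{n+1} + F_n.
   (fibF 0 = 1 is an unused filler value.) *)
Fixpoint fibF (n : nat) : nat :=
  match n with
  | O => 1%nat
  | S O => 1%nat
  | S ((S k) as k1) => (fibF k1 + fibF k)%nat
  end.

(* For a digit list e = (e(1),...,e(M)) : sum_k e(k) F_{M-k+1}.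
   Applied to a block b of length s this is b * F. *)
Fixpoint weight (e : list bool) : nat :=
  match e with
  | nil => 0%nat
  | x :: t => ((if x then fibF (S (length t)) else 0) + weight t)%nat
  end.

Definition is_zeck (m : nat) (e : list bool) : Prop :=
  e <> nil /\ nth 0 e false = true /\
  (forall k, (S k < length e)%nat -> ~ (nth k e false = true /\ nth (S k) e false = true)) /\
  m = weight e.

Definition LB (s m : nat) (b : list bool) : Prop :=
  exists e, is_zeck m e /\ (s <= length e)%nat /\ firstn s e = b.

Definition Fs (s : nat) (b : list bool) : Prop := exists m : nat, LB s m b.

Definition is_largest (s : nat) (b : list bool) : Prop :=
  Fs s b /\ forall c, Fs s c -> (weight c <= weight b)%nat.

(* b_{l+1}: (1,0,...,1,0,1,1) for s even, (1,0,...,1,1,0) for s odd. *)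
Definition special_block (s : nat) : list bool :=
  if Nat.even s
  then map (fun k => orb (Nat.odd k) (Nat.eqb k s)) (seq 1 s)
  else map (fun k => orb (andb (Nat.odd k) (Nat.ltb k s)) (Nat.eqb k (s - 1))) (seq 1 s).

(* tilde b : the next block b_{k+1} of F_s (with 1 + b_k*F = b_{k+1}*F),
   or b_{l+1} if there is none (b largest). *)
Definition btilde (s : nat) (b : list bool) : list bool :=
  epsilon (inhabits nil) (fun c =>
    (Fs s c /\ weight c = S (weight b)) \/
    ((~ exists c', Fs s c' /\ weight c' = S (weight b)) /\ c = special_block s)).

Definition phi : R := (1 + sqrt 5) / 2.
Definition omega : R := / phi.

(* b . hatF = sum_k b(k) omega^(k-1) *)
Fixpoint hatF (b : list bool) : R :=
  match b with
  | nil => 0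
  | x :: t => (if x then 1 else 0) + omega * hatF t
  end.

Definition logphi (x : R) : R := ln x / ln phi.

Definition frakF (x : R) : R :=
  phi / sqrt 5 * (Rpower phi x + Rpower phi (- x) * cos (PI * x) * Rpower phi (-2)).

Definition frakF_inv (y : R) : R :=
  epsilon (inhabits 0) (fun x => 1 <= x /\ frakF x = y).

(* Main.v *)
Require Import Defs.
From Stdlib Require Import Reals List.
From Stdlib Require Import Lra Lia Arith ClassicalEpsilon FunctionalExtensionality ZArith.
From Coquelicot Require Coquelicot.
Open Scope R_scope.

Lemma fibSS k : fibF (S (S k)) = (fibF (S k) + fibF k)%nat.
Proof. reflexivity. Qed.

Lemma fib_pos k : (1 <= fibF k)%nat.
Proof.
  induction k as [k IH] using lt_wf_ind.
  destruct k as [|[|k]]; [simpl; auto|simpl; auto|]. rewrite fibSS. specialize (IH k). lia.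
Qed.

Lemma fib_le_S k : (fibF k <= fibF (S k))%nat.
Proof. destruct k; simpl; auto. pose proof (fib_pos k). lia. Qed.

Lemma fib_lt_S k : (1 <= k)%nat -> (fibF k < fibF (S k))%nat.
Proof. intros. destruct k. lia. rewrite fibSS. pose proof (fib_pos k). lia. Qed.

Lemma fib_mono j k : (j <= k)%nat -> (fibF j <= fibF k)%nat.
Proof. induction 1; auto. pose proof (fib_le_S m). lia. Qed.

Lemma fib_strict j k : (1 <= j)%nat -> (j < k)%nat -> (fibF j < fibF k)%nat.
Proof. intros H1 H. induction H. apply fib_lt_S; auto.
  pose proof (fib_le_S m). lia. Qed.

Fixpoint nc (l : list bool) : Prop :=
  match l with
  | x :: ((y :: _) as t) => (andb x y = false) /\ nc t
  | _ => True
  end.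

Fixpoint V (m : nat) (l : list bool) : nat :=
  match l with
  | nil => 0%nat
  | x :: t => ((if x then fibF (S (length t + m)) else 0) + V m t)%nat
  end.

Lemma weight_V l : weight l = V 0 l.
Proof. induction l; simpl; auto. rewrite Nat.add_0_r, IHl. auto. Qed.

Lemma V_app m b t : V m (b ++ t) = (V (length t + m) b + V m t)%nat.
Proof. induction b; simpl; auto. rewrite IHb, length_app.
  replace (length b + length t + m)%nat with (length b + (length t + m))%nat by lia. lia. Qed.

Lemma weight_app b t : weight (b ++ t) = (V (length t) b + weight t)%nat.
Proof. rewrite !weight_V, V_app. rewrite Nat.add_0_r. auto. Qed.

Lemma weight_cons x t : weight (x :: t) = ((if x then fibF (S (length t)) else 0) + weight t)%nat.
Proof. reflexivity. Qed.

Lemma nc_cons x t : nc (x :: t) -> nc t.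
Proof. destruct t; simpl; tauto. Qed.

Lemma tail_bound : forall l, nc l -> (weight l < fibF (S (length l)))%nat.
Proof.
  intro l. remember (length l) as n. revert l Heqn.
  induction n as [n IH] using lt_wf_ind. intros l Hn Hnc.
  destruct l as [|x t]. subst n; simpl. lia.
  simpl in Hn. subst n. simpl weight.
  destruct x.
  - destruct t as [|y t'].
    + simpl. lia.
    + destruct y. simpl in Hnc. destruct Hnc as [H _]. discriminate.
      simpl weight. simpl length.
      assert (Hl : nc t') by (apply nc_cons in Hnc; apply nc_cons in Hnc; auto).
      specialize (IH (length t') ltac:(simpl; lia) t' eq_refl Hl).
      rewrite (fibSS (S (length t'))). simpl length in *. 
      rewrite (fibSS (length t')). lia.
  - specialize (IH (length t) ltac:(lia) t eq_refl (nc_cons _ _ Hnc)).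
    pose proof (fib_le_S (S (length t))). lia.
Qed.

Lemma zeck_exists : forall m r, (r < fibF (S m))%nat ->
  exists t, nc t /\ length t = m /\ weight t = r /\
    ((r < fibF m)%nat -> nth 0 t false = false).
Proof.
  intro m. induction m as [m IH] using lt_wf_ind. intros r Hr.
  destruct m as [|m].
  - assert (r = 0%nat) by (simpl in Hr; lia). subst r.
    exists nil. simpl. repeat split; auto.
  - destruct (Nat.lt_ge_cases r (fibF (S m))) as [Hlt|Hge].
    + destruct (IH m ltac:(lia) r Hlt) as [t [H1 [H2 [H3 _]]]].
      exists (false :: t). repeat split; simpl; auto.
      destruct t; simpl; auto.
    + destruct m as [|m].
      * exists (true :: nil). simpl in *. repeat split; auto; lia.
      * rewrite fibSS in Hr.
        destruct (IH m ltac:(lia) (r - fibF (S (S m)))%nat ltac:(lia)) as [t [H1 [H2 [H3 _]]]].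
        exists (true :: false :: t). split; [|split; [|split]].
        { destruct t; simpl; auto. }
        { simpl length. rewrite H2. auto. }
        { rewrite !weight_cons. simpl length. rewrite H2, H3. lia. }
        { intros; lia. }
Qed.

Lemma nc_nth l : nc l <-> forall k, (S k < length l)%nat -> ~ (nth k l false = true /\ nth (S k) l false = true).
Proof.
  induction l as [|x t IH]; simpl. split; auto. intros; lia.
  destruct t as [|y t'].
  - simpl. split; auto. intros; lia.
  - split.
    + intros [H1 H2] k Hk. destruct k.
      * simpl. intros [-> ->]. discriminate.
      * apply IH; auto. simpl in *; lia.
    + intros H. split.
      * specialize (H 0%nat ltac:(simpl; lia)). simpl in H.
        destruct x, y; auto. exfalso; auto.
      * apply IH. intros k Hk. apply (H (S k)). simpl in *; lia.
Qed.

Lemma nc_app_l b t : nc (b ++ t) -> nc b.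
Proof.
  induction b as [|x b IH]; simpl; auto.
  destruct b as [|y b']; simpl; auto. intros [H1 H2]. split; auto.
  apply IH. exact H2.
Qed.

Lemma nc_app_r b t : nc (b ++ t) -> nc t.
Proof. induction b; simpl; auto. intros H. apply IHb. apply nc_cons with a. auto. Qed.

Lemma nc_app_junction b t : nc (b ++ t) -> last b false = true -> nth 0 t false = false.
Proof.
  induction b as [|x b IH]; simpl. intros _ H; discriminate.
  destruct b as [|y b'].
  - simpl. destruct t as [|z t']. auto. simpl. intros [H _] ->. simpl in H. auto.
  - intros H Hl. apply IH. apply (nc_cons x). auto. auto.
Qed.

Lemma nc_app b t : nc b -> nc t -> (last b false = true -> nth 0 t false = false) -> nc (b ++ t).
Proof.
  induction b as [|x b IH]; simpl; auto.
  intros Hb Ht Hj. destruct b as [|y b'].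
  - simpl in *. destruct t as [|z t']; simpl; auto. split; auto.
    destruct x; simpl in *; auto.
  - simpl. split. destruct Hb; auto. apply IH; auto. apply (nc_cons x); auto.
Qed.

Lemma is_zeck_iff m e : is_zeck m e <-> (e <> nil /\ nth 0 e false = true /\ nc e /\ m = weight e).
Proof. unfold is_zeck. rewrite nc_nth. tauto. Qed.

Lemma Fs_props s b : Fs s b -> nc b /\ length b = s /\ ((1 <= s)%nat -> nth 0 b false = true).
Proof.
  intros [m [e [Hz [Hl Hf]]]]. apply is_zeck_iff in Hz. destruct Hz as [Hne [Hh [Hnc Hw]]].
  rewrite <- (firstn_skipn s e) in Hnc. rewrite Hf in Hnc.
  split. apply nc_app_l in Hnc; auto. split. subst b. rewrite length_firstn. lia.
  intros Hs. subst b. destruct s. lia. destruct e. contradiction. simpl in *. auto.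
Qed.

Definition tau (b : list bool) (m : nat) : nat :=
  if last b false then fibF m else fibF (S m).

Lemma LB_interval s K b : LB s K b ->
  exists m, (V m b <= K < V m b + tau b m)%nat /\ (fibF (s + m) <= K < fibF (S (s + m)))%nat.
Proof.
  intros [e [Hz [Hl Hf]]]. apply is_zeck_iff in Hz. destruct Hz as [Hne [Hh [Hnc Hw]]].
  pose proof (tail_bound e Hnc) as Htb.
  assert (Hlow : (fibF (length e) <= weight e)%nat).
  { destruct e. contradiction. simpl in Hh. subst b0. simpl. lia. }
  pose proof Hw as Hw0.
  rewrite <- (firstn_skipn s e) in Hnc, Hw. rewrite Hf in Hnc, Hw.
  set (t := skipn s e) in *.
  assert (Hlt : length t = (length e - s)%nat) by (unfold t; rewrite length_skipn; auto).
  exists (length t). rewrite weight_app in Hw. split.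
  - pose proof (tail_bound t (nc_app_r _ _ Hnc)).
    split. lia. unfold tau. destruct (last b false) eqn:Hlb.
    + pose proof (nc_app_junction _ _ Hnc Hlb).
      destruct t as [|z t']. simpl in *. lia. simpl in H0. subst z.
      pose proof (tail_bound t' (nc_cons _ _ (nc_app_r _ _ Hnc))). simpl in *. lia.
    + lia.
  - replace (s + length t)%nat with (length e) by lia. lia.
Qed.

Lemma interval_LB s K b m : (1 <= s)%nat -> Fs s b -> (V m b <= K < V m b + tau b m)%nat -> LB s K b.
Proof.
  intros Hs Hb HK. destruct (Fs_props s b Hb) as [Hnc [Hl Hh]].
  assert (Hr : (K - V m b < tau b m)%nat) by lia.
  assert (Hr' : (K - V m b < fibF (S m))%nat).
  { unfold tau in Hr. destruct (last b false); auto. pose proof (fib_le_S m); lia. }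
  destruct (zeck_exists m _ Hr') as [t [Ht1 [Ht2 [Ht3 Ht4]]]].
  exists (b ++ t). split; [|split].
  - apply is_zeck_iff. split. destruct b. simpl in Hl. lia. discriminate.
    split. destruct b. simpl in Hl; lia. simpl. apply Hh; auto.
    split. apply nc_app; auto. intros Hlb. apply Ht4. unfold tau in Hr. rewrite Hlb in Hr. auto.
    rewrite weight_app, Ht3, Ht2. lia.
  - rewrite length_app. lia.
  - rewrite firstn_app. rewrite Hl, Nat.sub_diag. simpl. rewrite app_nil_r.
    rewrite <- Hl. apply firstn_all.
Qed.

Lemma V_cons m x t : V m (x :: t) = ((if x then fibF (S (length t + m)) else 0) + V m t)%nat.
Proof. reflexivity. Qed.

Lemma weight_zero l m : weight l = 0%nat -> V m l = 0%nat.
Proof.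
  induction l as [|x t IH]; intros H. reflexivity. rewrite weight_cons in H. rewrite V_cons.
  destruct x. pose proof (fib_pos (S (length t))). lia. rewrite IH; auto.
Qed.

Lemma last_false t : last (false :: t) false = last t false.
Proof. destruct t; reflexivity. Qed.

Lemma last_tf t : last (true :: false :: t) false = last t false.
Proof. destruct t; reflexivity. Qed.

Lemma succ_overflow : forall L,
 (forall c d, nc c -> nc d -> length c = L -> length d = L -> weight d = S (weight c) ->
    forall m, V m d = (V m c + tau c m)%nat) /\
 (forall c, nc c -> length c = L -> S (weight c) = fibF (S L) ->
    forall m, (V m c + tau c m)%nat = fibF (S (L + m))).
Proof.
  intro L. induction L as [L IH] using lt_wf_ind. split.
  - intros c d Hc Hd Hlc Hld Hw m.
    destruct c as [|x c']; destruct d as [|y d']; simpl in Hlc, Hld; try (subst; discriminate).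
    rewrite !weight_cons in Hw. rewrite !V_cons.
    pose proof (tail_bound c' (nc_cons _ _ Hc)) as Tc.
    pose proof (tail_bound d' (nc_cons _ _ Hd)) as Td.
    destruct x, y.
    +
      destruct c' as [|x2 c2]. { destruct d' as [|y2 d2]; simpl in *; [lia|lia]. }
      destruct d' as [|y2 d2]. { simpl in *; lia. }
      destruct x2. { simpl in Hc. destruct Hc; discriminate. }
      destruct y2. { simpl in Hd. destruct Hd; discriminate. }
      simpl length in *. rewrite !weight_cons in Hw. rewrite !V_cons.
      assert (Hl2 : length c2 = length d2) by lia.
      rewrite Hl2 in Hw |- *.
      destruct (IH (length d2) ltac:(lia)) as [IH1 _].
      assert (E : V m d2 = (V m c2 + tau c2 m)%nat).
      { apply IH1; auto. apply nc_cons with false; apply nc_cons with true; auto.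
        apply nc_cons with false; apply nc_cons with true; auto. lia. }
      unfold tau in *. rewrite last_tf. lia.
    +
      assert (Hl2 : length d' = length c') by lia. rewrite Hl2 in Td. lia.
    +
      assert (Hl2 : length d' = length c') by lia. rewrite Hl2 in Hw.
      assert (Hd0 : weight d' = 0%nat) by lia.
      rewrite (weight_zero d' m Hd0).
      destruct (IH (length c') ltac:(lia)) as [_ IH2].
      assert (E := IH2 c' (nc_cons _ _ Hc) eq_refl ltac:(rewrite <- Hld, Hlc in *; lia) m).
      unfold tau in *. rewrite last_false. rewrite Hl2.
      lia.
    +
      destruct (IH (length c') ltac:(lia)) as [IH1 _].
      assert (E := IH1 c' d' (nc_cons _ _ Hc) (nc_cons _ _ Hd) eq_refl ltac:(lia) ltac:(lia) m).
      unfold tau in *. rewrite last_false. lia.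
  - intros c Hc Hlc Hw m.
    destruct c as [|x c'].
    + simpl in Hlc. subst L. unfold tau. simpl. lia.
    + simpl in Hlc. rewrite weight_cons in Hw. rewrite V_cons.
      pose proof (tail_bound c' (nc_cons _ _ Hc)) as Tc.
      destruct x.
      * destruct c' as [|x2 c2].
        -- subst L. unfold tau. cbn [last length V].
           replace (S (1 + m)) with (S (S m)) by lia. rewrite (fibSS m). simpl plus. lia.
        -- destruct x2. { simpl in Hc. destruct Hc; discriminate. }
           simpl length in *. rewrite weight_cons in Hw.
           destruct (IH (length c2) ltac:(lia)) as [_ IH2].
           subst L. rewrite (fibSS (S (length c2))) in Hw.
           assert (E := IH2 c2 (nc_cons _ _ (nc_cons _ _ Hc)) eq_refl ltac:(lia) m).
           unfold tau in *. rewrite last_tf.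
           replace (S (S (S (length c2)) + m)) with (S (S (S (length c2 + m)))) by lia.
           rewrite (fibSS (S (length c2 + m))).
           replace (S (S (length c2)) + m)%nat with (S (S (length c2 + m))) by lia.
           replace (S (length c2) + m)%nat with (S (length c2 + m)) by lia.
           rewrite V_cons. lia.
      * exfalso. subst L. pose proof (fib_lt_S (S (length c')) ltac:(lia)). lia.
Qed.

Lemma sqrt5_sq : sqrt 5 * sqrt 5 = 5.
Proof. apply sqrt_sqrt. lra. Qed.

Lemma sqrt5_bounds : 2.236 < sqrt 5 < 2.2361.
Proof.
  pose proof sqrt5_sq. pose proof (sqrt_pos 5). split; nra.
Qed.

Lemma phi_gt1 : 1.618 < phi < 1.61806.
Proof. unfold phi. pose proof sqrt5_bounds. lra. Qed.

Lemma phi_sq : phi * phi = phi + 1.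
Proof. unfold phi. pose proof sqrt5_sq. nra. Qed.

Lemma omega_eq : omega = phi - 1.
Proof. unfold omega. pose proof phi_gt1. pose proof phi_sq.
  field_simplify_eq; [nra| lra]. Qed.

Lemma omega_phi : omega * phi = 1.
Proof. unfold omega. pose proof phi_gt1. field. lra. Qed.

Fixpoint alt (j : nat) : list bool :=
  match j with O => nil | S j => true :: false :: alt j end.

Lemma hatF_alt j t : hatF (alt j ++ t) = phi + omega ^ (2 * j) * (hatF t - phi).
Proof.
  induction j. simpl. ring.
  change (alt (S j) ++ t) with (true :: false :: (alt j ++ t)). cbn [hatF].
  rewrite IHj. replace (2 * S j)%nat with (2 + 2 * j)%nat by lia. rewrite pow_add.
  assert (H1 : omega * (omega * phi) = omega) by (rewrite omega_phi; ring).
  transitivity (1 + omega * (omega * phi) + omega ^ 2 * omega ^ (2 * j) * (hatF t - phi)).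
  ring. rewrite H1. rewrite omega_eq at 1. ring.
Qed.

Lemma odd_2a1 a : Nat.odd (2 * a + 1) = true.
Proof. apply Nat.odd_spec. exists a. lia. Qed.
Lemma odd_2a2 a : Nat.odd (2 * a + 2) = false.
Proof. rewrite <- Nat.negb_even. replace (2 * a + 2)%nat with (2 * (a + 1))%nat by lia.
  rewrite Nat.even_mul. reflexivity. Qed.

Lemma map_odd_alt j a : map Nat.odd (seq (2 * a + 1) (2 * j)) = alt j.
Proof.
  revert a; induction j; intro a. reflexivity.
  replace (2 * S j)%nat with (S (S (2 * j))) by lia. cbn [seq map].
  rewrite odd_2a1. replace (S (2 * a + 1)) with (2 * a + 2)%nat by lia. rewrite odd_2a2.
  replace (S (2 * a + 2)) with (2 * (S a) + 1)%nat by lia. rewrite IHj. reflexivity.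
Qed.

Lemma special_even j : special_block (2 * j + 2) = alt j ++ true :: true :: nil.
Proof.
  unfold special_block.
  replace (Nat.even (2 * j + 2)) with true
    by (symmetry; rewrite <- Nat.negb_odd, odd_2a2; reflexivity).
  replace (2 * j + 2)%nat with (2 * j + 2)%nat by lia.
  rewrite seq_app, map_app.
  f_equal.
  - rewrite <- (map_odd_alt j 0). apply map_ext_in. intros k Hk. apply in_seq in Hk.
    replace (Nat.eqb k (2 * j + 2)) with false by (symmetry; apply Nat.eqb_neq; lia).
    apply Bool.orb_false_r.
  - cbn [seq map]. replace (1 + 2 * j)%nat with (2 * j + 1)%nat by lia. rewrite odd_2a1.
    replace (S (2 * j + 1)) with (2 * j + 2)%nat by lia. rewrite Nat.eqb_refl.
    rewrite Bool.orb_true_r. reflexivity.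
Qed.

Lemma special_odd j : special_block (2 * j + 3) = alt j ++ true :: true :: false :: nil.
Proof.
  unfold special_block.
  replace (Nat.even (2 * j + 3)) with false
    by (symmetry; replace (2 * j + 3)%nat with (2 * (j + 1) + 1)%nat by lia;
        rewrite <- Nat.negb_odd, odd_2a1; reflexivity).
  replace (2 * j + 3)%nat with (2 * j + 3)%nat by lia.
  rewrite seq_app, map_app.
  f_equal.
  - rewrite <- (map_odd_alt j 0). apply map_ext_in. intros k Hk. apply in_seq in Hk.
    replace (Nat.eqb k (2 * j + 3 - 1)) with false by (symmetry; apply Nat.eqb_neq; lia).
    replace (Nat.ltb k (2 * j + 3)) with true by (symmetry; apply Nat.ltb_lt; lia).
    rewrite Bool.andb_true_r. apply Bool.orb_false_r.
  - cbn [seq map]. replace (1 + 2 * j)%nat with (2 * j + 1)%nat by lia. rewrite odd_2a1.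
    replace (S (2 * j + 1)) with (2 * j + 2)%nat by lia. rewrite odd_2a2.
    replace (S (2 * j + 2)) with (2 * (j + 1) + 1)%nat by lia. rewrite odd_2a1.
    replace (Nat.ltb (2 * j + 1) (2 * j + 3)) with true by (symmetry; apply Nat.ltb_lt; lia).
    replace (Nat.eqb (2 * j + 2) (2 * j + 3 - 1)) with true by (symmetry; apply Nat.eqb_eq; lia).
    replace (Nat.ltb (2 * (j + 1) + 1) (2 * j + 3)) with false by (symmetry; apply Nat.ltb_ge; lia).
    replace (Nat.eqb (2 * (j + 1) + 1) (2 * j + 3 - 1)) with false by (symmetry; apply Nat.eqb_neq; lia).
    reflexivity.
Qed.

Lemma hatF_special s : (2 <= s)%nat -> hatF (special_block s) = phi.
Proof.
  intros Hs. destruct (Nat.Even_or_Odd s) as [[j Hj]|[j Hj]].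
  - destruct j. lia. replace s with (2 * j + 2)%nat by lia. rewrite special_even, hatF_alt.
    simpl. rewrite omega_eq. ring_simplify. pose proof phi_sq. nra.
  - destruct j. lia. replace s with (2 * j + 3)%nat by lia. rewrite special_odd, hatF_alt.
    simpl. rewrite omega_eq. ring_simplify. pose proof phi_sq. nra.
Qed.

Definition caseA (s : nat) (b : list bool) : Prop :=
  exists c, Fs s c /\ weight c = S (weight b).

Lemma bt_caseA s b : caseA s b -> Fs s (btilde s b) /\ weight (btilde s b) = S (weight b).
Proof.
  intros HA. unfold btilde.
  destruct (epsilon_spec (inhabits nil) (fun c =>
    (Fs s c /\ weight c = S (weight b)) \/
    ((~ exists c', Fs s c' /\ weight c' = S (weight b)) /\ c = special_block s))) as [H|[H _]].
  - destruct HA as [c Hc]. exists c. left. auto.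
  - auto.
  - exfalso. apply H. exact HA.
Qed.

Lemma bt_caseB s b : ~ caseA s b -> btilde s b = special_block s.
Proof.
  intros HB. unfold btilde.
  destruct (epsilon_spec (inhabits nil) (fun c =>
    (Fs s c /\ weight c = S (weight b)) \/
    ((~ exists c', Fs s c' /\ weight c' = S (weight b)) /\ c = special_block s))) as [H|[_ H]].
  - exists (special_block s). right. split; auto.
  - exfalso. apply HB. exists (epsilon (inhabits nil) (fun c =>
    (Fs s c /\ weight c = S (weight b)) \/
    ((~ exists c', Fs s c' /\ weight c' = S (weight b)) /\ c = special_block s))). exact H.
  - exact H.
Qed.

Lemma head_weight l : nc l -> (1 <= length l)%nat ->
  (nth 0 l false = true <-> (fibF (length l) <= weight l)%nat).
Proof.
  intros Hnc Hl. destruct l as [|x t]. simpl in Hl; lia.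
  rewrite weight_cons. simpl length. simpl nth. destruct x.
  - split; intros; auto. lia.
  - pose proof (tail_bound t (nc_cons _ _ Hnc)). split; intros; [discriminate|lia].
Qed.

Lemma caseB_overflow s b : (2 <= s)%nat -> Fs s b -> ~ caseA s b -> S (weight b) = fibF (S s).
Proof.
  intros Hs Hb HB. destruct (Fs_props s b Hb) as [Hnc [Hl Hh]].
  pose proof (tail_bound b Hnc) as T. rewrite Hl in T.
  destruct (Nat.eq_dec (S (weight b)) (fibF (S s))) as [E|NE]; auto.
  exfalso. apply HB.
  destruct (zeck_exists s (S (weight b)) ltac:(lia)) as [t [Ht1 [Ht2 [Ht3 _]]]].
  assert (Hbh := proj1 (head_weight b Hnc ltac:(lia)) (Hh ltac:(lia))). rewrite Hl in Hbh.
  assert (Hth : nth 0 t false = true).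
  { apply (head_weight t Ht1 ltac:(lia)). rewrite Ht2. lia. }
  exists t. split; auto.
  exists (weight t). exists t. split; [|split].
  - apply is_zeck_iff. split. destruct t. simpl in Ht2; lia. discriminate. auto.
  - lia.
  - rewrite <- Ht2. apply firstn_all.
Qed.

Lemma ln_phi_gt : 0.3 < ln phi.
Proof.
  pose proof phi_gt1.
  assert (exp 0.3 < phi).
  { pose proof (exp_ineq1_le (-0.3)).
    assert (E : exp (-0.3) * exp 0.3 = 1) by (rewrite <- exp_plus; replace (-0.3 + 0.3) with 0 by lra; apply exp_0).
    assert (0 < exp 0.3) by apply exp_pos. nra. }
  rewrite <- (ln_exp 0.3). apply ln_increasing. apply exp_pos. auto.
Qed.

Lemma Rpower_phi_pos x : 0 < Rpower phi x.
Proof. unfold Rpower. apply exp_pos. Qed.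

Lemma cos_PI_n n : cos (PI * INR n) = (-1) ^ n.
Proof.
  induction n. simpl. rewrite Rmult_0_r. apply cos_0.
  rewrite S_INR. replace (PI * (INR n + 1)) with (PI * INR n + PI) by ring.
  rewrite neg_cos, IHn. simpl. ring.
Qed.

Definition Bn (n : nat) : R := phi / sqrt 5 * (phi ^ n + (- omega) ^ n * omega ^ 2).

Lemma frakF_nat n : frakF (INR n) = Bn n.
Proof.
  unfold frakF, Bn. pose proof phi_gt1.
  rewrite Rpower_pow by lra. rewrite Rpower_Ropp, Rpower_pow by lra.
  replace (-2) with (- INR 2) by (simpl; lra). rewrite Rpower_Ropp, Rpower_pow by lra.
  rewrite (Rmult_comm PI (INR n)). rewrite (Rmult_comm (INR n) PI), cos_PI_n.
  replace (- omega) with (-1 * omega) by ring. rewrite Rpow_mult_distr.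
  unfold omega. rewrite !pow_inv. ring.
Qed.

Lemma sqrt5_pos : 0 < sqrt 5.
Proof. pose proof sqrt5_bounds. lra. Qed.

Lemma pow_fib x n : x * x = x + 1 -> x ^ (S (S n)) = x ^ (S n) + x ^ n.
Proof. intros H. simpl. replace (x * (x * x ^ n)) with (x * x * x ^ n) by ring. rewrite H. ring. Qed.

Lemma Bn_rec n : Bn (S (S n)) = Bn (S n) + Bn n.
Proof.
  unfold Bn. rewrite (pow_fib phi n phi_sq).
  assert (H : (- omega) * (- omega) = - omega + 1).
  { pose proof omega_phi. pose proof omega_eq. pose proof phi_sq. nra. }
  rewrite (pow_fib _ n H). ring.
Qed.

Lemma fib_binet n : INR (fibF n) = Bn n.
Proof.
  induction n as [n IH] using lt_wf_ind.
  destruct n as [|[|n]].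
  - unfold Bn. simpl. pose proof omega_phi. pose proof omega_eq. pose proof phi_sq. pose proof sqrt5_sq.
    pose proof sqrt5_pos. unfold phi in *. field_simplify_eq; [|lra]. nra.
  - unfold Bn. simpl. pose proof omega_phi. pose proof omega_eq. pose proof phi_sq. pose proof sqrt5_sq.
    pose proof sqrt5_pos. unfold phi in *. field_simplify_eq; [|lra]. nra.
  - rewrite fibSS, plus_INR, Bn_rec, IH, IH by lia. reflexivity.
Qed.

Definition Pf (x : R) : R := phi / sqrt 5 * Rpower phi x.

Lemma Rpower_ge1 x : 0 <= x -> 1 <= Rpower phi x.
Proof. intros. pose proof phi_gt1. rewrite <- (Rpower_O phi) by lra. apply Rle_Rpower; lra. Qed.

Lemma frakF_err x : 0 <= x -> Rabs (frakF x - Pf x) <= 1/2.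
Proof.
  intros Hx. unfold frakF, Pf. pose proof phi_gt1. pose proof sqrt5_bounds.
  replace (phi / sqrt 5 * (Rpower phi x + Rpower phi (- x) * cos (PI * x) * Rpower phi (-2)) -
           phi / sqrt 5 * Rpower phi x) with (phi / sqrt 5 * Rpower phi (- x) * Rpower phi (-2) * cos (PI * x)) by ring.
  rewrite !Rabs_mult. 
  assert (A1 : Rabs (cos (PI * x)) <= 1) by (apply Rabs_le; apply COS_bound).
  rewrite Rpower_Ropp. pose proof (Rpower_ge1 x Hx).
  replace (-2) with (- INR 2) by (simpl; lra). rewrite Rpower_Ropp, Rpower_pow by lra.
  assert (0 < / Rpower phi x <= 1).
  { split. apply Rinv_0_lt_compat; lra. rewrite <- Rinv_1. apply Rinv_le_contravar; lra. }
  assert (0 < / phi ^ 2 <= / 2.6).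
  { simpl. split. apply Rinv_0_lt_compat; nra. apply Rinv_le_contravar; nra. }
  rewrite (Rabs_right (phi / sqrt 5)) by (apply Rle_ge; apply Rlt_le; apply Rdiv_lt_0_compat; lra).
  rewrite (Rabs_right (/ Rpower phi x)) by lra. rewrite (Rabs_right (/ phi ^ 2)) by lra.
  assert (phi / sqrt 5 <= 0.73).
  { apply Rmult_le_reg_r with (sqrt 5). lra. unfold Rdiv. rewrite Rmult_assoc, Rinv_l by lra. lra. }
  assert (0 <= phi / sqrt 5) by (apply Rlt_le; apply Rdiv_lt_0_compat; lra).
  assert (0 <= Rabs (cos (PI * x))) by apply Rabs_pos.
  assert (phi / sqrt 5 * / Rpower phi x <= 0.73) by nra.
  assert (phi / sqrt 5 * / Rpower phi x * / phi ^ 2 <= 0.73 * / 2.6) by (apply Rmult_le_compat; nra).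
  assert (0.73 * / 2.6 <= 0.3) by (apply Rmult_le_reg_r with 2.6; [lra|rewrite Rmult_assoc, Rinv_l; lra]).
  assert (0 <= phi / sqrt 5 * / Rpower phi x * / phi ^ 2) by (apply Rmult_le_pos; [apply Rmult_le_pos|]; lra).
  nra.
Qed.

Lemma Pf_nat n : Pf (INR n) = phi / sqrt 5 * phi ^ n.
Proof. unfold Pf. rewrite Rpower_pow; auto. pose proof phi_gt1; lra. Qed.

Lemma fib_err n : Rabs (INR (fibF n) - phi / sqrt 5 * phi ^ n) <= 1/2.
Proof. rewrite fib_binet, <- frakF_nat, <- Pf_nat. apply frakF_err. apply pos_INR. Qed.

Lemma hatF_nonneg c : 0 <= hatF c.
Proof. induction c; simpl. lra. pose proof phi_gt1. unfold omega.
  assert (0 < / phi) by (apply Rinv_0_lt_compat; lra). destruct a; nra. Qed.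

Lemma hatF_le c : hatF c <= phi * phi.
Proof. induction c; simpl. pose proof phi_gt1; nra. pose proof phi_gt1. pose proof omega_eq. pose proof phi_sq.
  assert (omega * hatF c <= omega * (phi * phi)) by (apply Rmult_le_compat_l; lra).
  destruct a; nra. Qed.

Lemma hatF_ge1 c : nth 0 c false = true -> 1 <= hatF c.
Proof. destruct c; simpl. discriminate. intros ->. pose proof (hatF_nonneg c). pose proof phi_gt1. pose proof omega_eq. nra. Qed.

Lemma V_err m c : Rabs (INR (V m c) - phi / sqrt 5 * phi ^ (length c + m) * hatF c) <= INR (length c) / 2.
Proof.
  induction c as [|x t IH]. simpl. match goal with |- Rabs ?a <= _ => replace a with 0 by ring end. rewrite Rabs_R0. lra.
  rewrite V_cons. simpl length. rewrite plus_INR, S_INR. cbn [hatF].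
  assert (E : phi / sqrt 5 * phi ^ (S (length t) + m) * ((if x then 1 else 0) + omega * hatF t)
     = (if x then phi / sqrt 5 * phi ^ (S (length t + m)) else 0) + phi / sqrt 5 * phi ^ (length t + m) * hatF t).
  { replace (S (length t) + m)%nat with (S (length t + m)) by lia. simpl.
    pose proof omega_phi. destruct x.
    - transitivity (phi / sqrt 5 * (phi * phi ^ (length t + m)) + phi / sqrt 5 * phi ^ (length t + m) * hatF t * (omega * phi)). ring.
      rewrite H. ring.
    - transitivity (phi / sqrt 5 * phi ^ (length t + m) * hatF t * (omega * phi)). ring. rewrite H. ring. }
  rewrite E.
  destruct x.
  - pose proof (fib_err (S (length t + m))).
    replace (INR (fibF (S (length t + m))) + INR (V m t) -
      (phi / sqrt 5 * phi ^ S (length t + m) + phi / sqrt 5 * phi ^ (length t + m) * hatF t))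
      with ((INR (fibF (S (length t + m))) - phi / sqrt 5 * phi ^ S (length t + m)) +
            (INR (V m t) - phi / sqrt 5 * phi ^ (length t + m) * hatF t)) by ring.
    eapply Rle_trans. apply Rabs_triang. lra.
  - simpl INR. replace (0 + INR (V m t) - (0 + phi / sqrt 5 * phi ^ (length t + m) * hatF t))
      with (INR (V m t) - phi / sqrt 5 * phi ^ (length t + m) * hatF t) by ring. lra.
Qed.

Lemma abs_bounds a b : Rabs a <= b -> - b <= a <= b.
Proof. unfold Rabs. destruct (Rcase_abs a); lra. Qed.

Lemma inv_le_help a b : 0 < a -> 1 <= a * b -> / a <= b.
Proof. intros. apply Rmult_le_reg_l with a; auto. rewrite Rinv_r; lra. Qed.

Definition fder (x : R) : R := phi / sqrt 5 * (ln phi * exp (x * ln phi) +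
  (- ln phi * exp (- x * ln phi) * cos (PI * x) - PI * exp (- x * ln phi) * sin (PI * x)) * Rpower phi (-2)).

Module DerPart.
Import Coquelicot.Coquelicot.
Lemma frakF_der_aux x : derivable_pt_lim frakF x (fder x).
Proof.
  apply is_derive_Reals.
  assert (Hf : frakF = fun x => phi / sqrt 5 * (exp (x * ln phi) + exp (- x * ln phi) * cos (PI * x) * Rpower phi (-2))).
  { apply functional_extensionality. intro y. unfold frakF, Rpower. f_equal. }
  rewrite Hf. auto_derive. auto. unfold fder. ring.
Qed.
End DerPart.
Definition frakF_der := DerPart.frakF_der_aux.

Lemma fder_pos x : 2 <= x -> 0 < fder x.
Proof.
  intros Hx. unfold fder. pose proof phi_gt1. pose proof ln_phi_gt. pose proof PI_4. pose proof PI_RGT_0.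
  pose proof sqrt5_bounds.
  set (l := ln phi) in *.
  assert (HA : phi ^ 2 <= exp (x * l)).
  { change (exp (x * l)) with (Rpower phi x). rewrite <- Rpower_pow by lra.
    apply Rle_Rpower; simpl; lra. }
  assert (Hc2 : Rpower phi (-2) = / phi ^ 2).
  { replace (-2) with (- INR 2) by (simpl; lra). rewrite Rpower_Ropp, Rpower_pow by lra. auto. }
  assert (Hu : exp (- x * l) = / exp (x * l)).
  { replace (- x * l) with (- (x * l)) by ring. apply exp_Ropp. }
  assert (Hp2 : 2.6 <= phi ^ 2) by (simpl; nra).
  assert (Hc2b : 0 < / phi ^ 2 <= / 2.6) by (split; [apply Rinv_0_lt_compat; lra| apply Rinv_le_contravar; lra]).
  assert (Hub : 0 < exp (- x * l) <= / phi ^ 2).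
  { split. apply exp_pos. rewrite Hu. apply Rinv_le_contravar; lra. }
  rewrite Hc2.
  set (u := exp (- x * l)) in *. set (A := exp (x * l)) in *. set (c := / phi ^ 2) in *.
  pose proof (COS_bound (PI * x)). pose proof (SIN_bound (PI * x)).
  set (co := cos (PI * x)) in *. set (si := sin (PI * x)) in *.
  assert (0 <= l * u * (1 - co)) by (apply Rmult_le_pos; [apply Rmult_le_pos|]; lra).
  assert (0 <= PI * u * (1 - si)) by (apply Rmult_le_pos; [apply Rmult_le_pos|]; lra).
  assert (T1 : - l * u * co - PI * u * si >= - (u * (l + PI))).
  { assert (E : - l * u * co - PI * u * si = - (u * (l + PI)) + (l * u * (1 - co) + PI * u * (1 - si))).
    { ring. }
    rewrite E. lra. }
  assert (T2 : u * c <= / 2.6 * / 2.6) by (apply Rmult_le_compat; lra).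
  assert (T3 : / 2.6 * / 2.6 <= 0.15) by (rewrite <- Rinv_mult; apply inv_le_help; lra).
  assert (T4 : (- l * u * co - PI * u * si) * c >= - (u * c) * (l + PI)).
  { replace (- (u * c) * (l + PI)) with (- (u * (l + PI)) * c) by ring.
    apply Rle_ge, Rmult_le_compat_r; lra. }
  assert (T5 : l * A >= 2.6 * l) by nra.
  assert (T6 : u * c * (l + PI) <= 0.15 * (l + 4)) by nra.
  apply Rmult_lt_0_compat. apply Rdiv_lt_0_compat; lra. nra.
Qed.

Definition frakF_derivable : derivable frakF := fun x => exist _ (fder x) (frakF_der x).

Lemma frakF_incr a b : 2 <= a -> a < b -> frakF a < frakF b.
Proof.
  intros Ha Hab.
  apply (derive_increasing_interv 2 (b + 1) frakF frakF_derivable); try lra.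
  intros t Ht. simpl. apply fder_pos. lra.
Qed.

Lemma frakF_cont : continuity frakF.
Proof. apply derivable_continuous. exact frakF_derivable. Qed.

Lemma fib_ge_n n : (n <= fibF n)%nat.
Proof.
  induction n as [n IH] using lt_wf_ind. destruct n as [|[|n]]. lia. simpl; lia.
  rewrite fibSS. pose proof (IH (S n) ltac:(lia)). pose proof (fib_pos n). lia.
Qed.

Lemma frakF_inv_spec (K : nat) : (1 <= K)%nat ->
  1 <= frakF_inv (INR K) /\ frakF (frakF_inv (INR K)) = INR K.
Proof.
  intros HK. unfold frakF_inv.
  apply (epsilon_spec (inhabits 0) (fun x => 1 <= x /\ frakF x = INR K)).
  assert (H1 : frakF 1 = 1). { replace 1 with (INR 1) by reflexivity. rewrite frakF_nat, <- fib_binet. reflexivity. }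
  assert (H2 : frakF (INR K) = INR (fibF K)) by (rewrite frakF_nat, <- fib_binet; auto).
  assert (HK1 : 1 <= INR K) by (replace 1 with (INR 1) by reflexivity; apply le_INR; auto).
  assert (HK2 : INR K <= INR (fibF K)) by (apply le_INR; apply fib_ge_n).
  destruct (IVT_cor (fun x => frakF x - INR K) 1 (INR K)) as [z [Hz1 Hz2]].
  - apply continuity_minus. apply frakF_cont. apply continuity_const. intros a b; auto.
  - auto.
  - rewrite H1, H2. nra.
  - exists z. split. lra. lra.
Qed.

Lemma frakF_small x : 1 <= x <= 2 -> frakF x < 3.
Proof.
  intros Hx. pose proof (frakF_err x ltac:(lra)). apply abs_bounds in H.
  assert (Pf x <= Pf (INR 2)).
  { unfold Pf. apply Rmult_le_compat_l. pose proof sqrt5_bounds. pose proof phi_gt1.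
    apply Rlt_le; apply Rdiv_lt_0_compat; lra. apply Rle_Rpower. pose proof phi_gt1; lra. simpl; lra. }
  rewrite Pf_nat in H0. pose proof sqrt5_bounds. pose proof phi_gt1.
  assert (phi / sqrt 5 * phi ^ 2 < 2.4).
  { apply Rmult_lt_reg_r with (sqrt 5). lra. unfold Rdiv.
    replace (phi * / sqrt 5 * phi ^ 2 * sqrt 5) with (phi * phi ^ 2 * (sqrt 5 * / sqrt 5)) by ring.
    rewrite Rinv_r by lra. simpl. nra. }
  lra.
Qed.

Lemma x_range (K M : nat) : (3 <= K)%nat -> (2 <= M)%nat -> (fibF M <= K < fibF (S M))%nat ->
  INR M <= frakF_inv (INR K) < INR M + 1 /\ frakF (frakF_inv (INR K)) = INR K /\
  frac_part (frakF_inv (INR K)) = frakF_inv (INR K) - INR M.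
Proof.
  intros HK HM HF.
  destruct (frakF_inv_spec K ltac:(lia)) as [H1 H2].
  set (x := frakF_inv (INR K)) in *.
  assert (Hx2 : 2 <= x).
  { destruct (Rlt_or_le x 2) as [Hl|Hl]; auto. pose proof (frakF_small x ltac:(lra)).
    assert (3 <= INR K) by (replace 3 with (INR 3) by (simpl; lra); apply le_INR; auto). lra. }
  assert (HM2 : 2 <= INR M) by (replace 2 with (INR 2) by (simpl; lra); apply le_INR; auto).
  assert (A : INR M <= x).
  { destruct (Rlt_or_le x (INR M)) as [Hl|Hl]; auto. exfalso.
    pose proof (frakF_incr x (INR M) Hx2 Hl). rewrite frakF_nat, <- fib_binet in H.
    assert (INR (fibF M) <= INR K) by (apply le_INR; lia). lra. }
  assert (B : x < INR M + 1).
  { destruct (Rlt_or_le x (INR M + 1)) as [Hl|Hl]; auto. exfalso.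
    assert (frakF (INR (S M)) <= frakF x).
    { destruct (Req_dec x (INR (S M))) as [E|E]. rewrite E; lra.
      apply Rlt_le, frakF_incr. rewrite S_INR; lra. rewrite S_INR in *; lra. }
    rewrite frakF_nat, <- fib_binet in H.
    assert (INR K < INR (fibF (S M))) by (apply lt_INR; lia). lra. }
  split; [lra|split; auto].
  symmetry. apply (Int_part_frac_part_spec x (Z.of_nat M)). lra.
  rewrite <- INR_IZR_INZ. ring.
Qed.

Lemma lnphi_pos : 0 < ln phi.
Proof. pose proof ln_phi_gt. lra. Qed.

Lemma logphi_Rpower t : logphi (Rpower phi t) = t.
Proof. unfold logphi. rewrite ln_Rpower. field. pose proof lnphi_pos; lra. Qed.

Lemma logphi_mult a b : 0 < a -> 0 < b -> logphi (a * b) = logphi a + logphi b.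
Proof. intros. unfold logphi. rewrite ln_mult by auto. field. pose proof lnphi_pos; lra. Qed.

Lemma logphi_lt a b : 0 < a -> a < b -> logphi a < logphi b.
Proof. intros. unfold logphi. apply Rmult_lt_compat_r. apply Rinv_0_lt_compat, lnphi_pos.
  apply ln_increasing; auto. Qed.

Lemma logphi_le a b : 0 < a -> a <= b -> logphi a <= logphi b.
Proof. intros. destruct H0. apply Rlt_le, logphi_lt; auto. subst; lra. Qed.

Lemma logphi_1 : logphi 1 = 0.
Proof. unfold logphi. rewrite ln_1. unfold Rdiv. ring. Qed.

Lemma logphi_phi : logphi phi = 1.
Proof. unfold logphi. field. pose proof lnphi_pos; lra. Qed.

Lemma core (K M m s : nat) (c : list bool) (eps : R) :
  (3 <= K)%nat -> (2 <= M)%nat -> (fibF M <= K < fibF (S M))%nat -> M = (s + m)%nat ->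
  length c = s -> 1 <= hatF c ->
  eps = INR (s + 1) * phi / (INR K - 1) -> eps <= 1/4 ->
  ((V m c <= K)%nat -> logphi (hatF c) + logphi (1 - eps) <= frakF_inv (INR K) - INR M) /\
  ((K < V m c)%nat -> frakF_inv (INR K) - INR M < logphi (hatF c) - logphi (1 - eps)).
Proof.
  intros HK HM HF HMs Hl Hh Heps Heps4.
  destruct (x_range K M HK HM HF) as [[Hx1 Hx2] [Hfx _]].
  set (x := frakF_inv (INR K)) in *.
  pose proof phi_gt1. pose proof sqrt5_bounds.
  set (Q := phi / sqrt 5 * phi ^ M).
  assert (HQ : 0 < Q). { unfold Q. apply Rmult_lt_0_compat. apply Rdiv_lt_0_compat; lra. apply pow_lt; lra. }
  set (y := Rpower phi (x - INR M)).
  assert (Hy : 0 < y) by apply Rpower_phi_pos.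
  assert (HPf : Pf x = Q * y).
  { unfold Pf, Q, y. replace x with ((x - INR M) + INR M) at 1 by ring.
    rewrite Rpower_plus, Rpower_pow by lra. ring. }
  pose proof (pos_INR M). assert (E1 := frakF_err x ltac:(lra)). rewrite Hfx, HPf in E1. apply abs_bounds in E1.
  assert (E2 := V_err m c). rewrite Hl, <- HMs in E2. fold Q in E2. apply abs_bounds in E2.
  assert (E3 := fib_err (S M)). apply abs_bounds in E3.
  assert (HphiQ : phi / sqrt 5 * phi ^ S M = phi * Q) by (unfold Q; simpl; ring).
  rewrite HphiQ in E3.
  assert (HKr : 3 <= INR K) by (replace 3 with (INR 3) by (simpl; lra); apply le_INR; auto).
  assert (HKF : INR K + 1 <= INR (fibF (S M))) by (rewrite <- S_INR; apply le_INR; lia).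
  assert (Hs : 0 <= INR s) by apply pos_INR.
  rewrite plus_INR in Heps. simpl (INR 1) in Heps.
  assert (HeQ : INR s + 1 <= eps * Q).
  { rewrite Heps. unfold Rdiv. 
    replace ((INR s + 1) * phi * / (INR K - 1) * Q) with ((INR s + 1) * (phi * Q) / (INR K - 1)) by (field; lra).
    apply Rmult_le_reg_r with (INR K - 1). lra. unfold Rdiv. rewrite Rmult_assoc, Rinv_l by lra.
    rewrite Rmult_1_r. apply Rmult_le_compat_l; lra. }
  assert (Heps0 : 0 <= eps).
  { rewrite Heps. apply Rlt_le, Rdiv_lt_0_compat. nra. lra. }
  assert (Hlogy : logphi y = x - INR M) by (unfold y; apply logphi_Rpower).
  split.
  - intros HV. apply le_INR in HV.
    assert (Q * (hatF c - y) <= Q * eps) by nra.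
    assert (hatF c - y <= eps) by (apply Rmult_le_reg_l with Q; auto).
    assert (hatF c * (1 - eps) <= y) by nra.
    rewrite <- Hlogy, <- logphi_mult by lra. apply logphi_le. apply Rmult_lt_0_compat; lra. auto.
  - intros HV. apply lt_INR in HV.
    assert (Q * (y - hatF c) < Q * eps) by nra.
    assert (y - hatF c < eps) by (apply Rmult_lt_reg_l with Q; auto).
    assert (y < hatF c * (1 + eps)) by nra.
    rewrite <- Hlogy.
    apply Rlt_le_trans with (logphi (hatF c * (1 + eps))). apply logphi_lt; auto.
    rewrite logphi_mult by lra.
    assert (logphi (1 + eps) + logphi (1 - eps) <= 0).
    { rewrite <- logphi_mult by lra. rewrite <- logphi_1. apply logphi_le. nra. nra. }
    lra.
Qed.

Lemma nat_above (r : R) : exists n : nat, r < INR n.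
Proof.
  destruct (archimed r) as [H1 H2].
  destruct (Z_lt_le_dec (up r) 0) as [Hz|Hz].
  - exists 0%nat. simpl. apply IZR_lt in Hz. lra.
  - exists (Z.to_nat (up r)). rewrite INR_IZR_INZ, Z2Nat.id by auto. lra.
Qed.

Lemma fib_bracket K : (1 <= K)%nat -> exists M, (1 <= M)%nat /\ (fibF M <= K < fibF (S M))%nat.
Proof.
  induction K. lia. intros H. destruct K.
  - exists 1%nat. simpl. lia.
  - destruct IHK as [M [HM1 [HM2 HM3]]]. lia.
    destruct (Nat.eq_dec (S (S K)) (fibF (S M))) as [E|NE].
    + exists (S M). split. lia. split. lia. rewrite fibSS. pose proof (fib_pos M). lia.
    + exists M. split; auto. lia.
Qed.

Lemma bracket_unique K M1 M2 : (fibF M1 <= K < fibF (S M1))%nat -> (fibF M2 <= K < fibF (S M2))%nat -> M1 = M2.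
Proof.
  intros H1 H2. destruct (Nat.lt_trichotomy M1 M2) as [L|[E|L]]; auto.
  - pose proof (fib_mono (S M1) M2 L). lia.
  - pose proof (fib_mono (S M2) M1 L). lia.
Qed.

Lemma neg_log_bound e : 0 <= e <= 1/4 -> 0 <= - logphi (1 - e) <= 5 * e.
Proof.
  intros He. pose proof lnphi_pos. pose proof ln_phi_gt.
  assert (A : ln (1 - e) <= 0).
  { rewrite <- ln_1. destruct (Req_dec e 0). subst. replace (1 - 0) with 1 by ring. lra.
    apply Rlt_le, ln_increasing; lra. }
  assert (B : - ln (1 - e) <= e / (1 - e)).
  { rewrite <- ln_Rinv by lra. pose proof (exp_ineq1_le (ln (/ (1 - e)))).
    rewrite exp_ln in H1 by (apply Rinv_0_lt_compat; lra).
    assert (/ (1 - e) - 1 = e / (1 - e)) by (field; lra). lra. }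
  assert (C : e / (1 - e) <= 4 / 3 * e).
  { unfold Rdiv. apply Rmult_le_reg_r with (1 - e). lra.
    rewrite Rmult_assoc, Rinv_l by lra. nra. }
  unfold logphi. split.
  - replace (- (ln (1 - e) / ln phi)) with ((- ln (1 - e)) * / ln phi) by (field; lra).
    apply Rmult_le_pos. lra. apply Rlt_le, Rinv_0_lt_compat; lra.
  - replace (- (ln (1 - e) / ln phi)) with ((- ln (1 - e)) / ln phi) by (field; lra).
    apply Rmult_le_reg_r with (ln phi). lra. unfold Rdiv. rewrite Rmult_assoc, Rinv_l by lra.
    nra.
Qed.

Theorem lemma4p4 (K : nat -> nat) (s : nat) (b : list bool)
  (HKpos : forall n, (0 < K n)%nat)
  (HKinf : forall M : nat, exists N : nat, forall n, (N <= n)%nat -> (M <= K n)%nat)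
  (Hs : (2 <= s)%nat) (Hb : Fs s b) :
  exists gamma gammat : nat -> R,
    Un_cv gamma 0 /\ Un_cv gammat 0 /\
    (is_largest s b -> forall n, gammat n = 0) /\
    forall n : nat,
      LB s (K n) b <->
      (logphi (hatF b) + gamma n <= frac_part (frakF_inv (INR (K n))) /\
       frac_part (frakF_inv (INR (K n))) < logphi (hatF (btilde s b)) + gammat n).
Proof.
  set (eps := fun n => INR (s + 1) * phi / (INR (K n) - 1)).
  set (good := fun n => (fibF s <= K n)%nat /\ (3 <= K n)%nat /\ eps n <= 1/4).
  set (g := fun n => if excluded_middle_informative (good n) then - logphi (1 - eps n) else 2).
  set (gamma := fun n => if excluded_middle_informative (LB s (K n) b) then - g n else g n).
  set (gammat := fun n => if excluded_middle_informative (caseA s b) then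
                   (if excluded_middle_informative (LB s (K n) b) then g n else - g n) else 0).
  pose proof phi_gt1 as Hphi.
  destruct (Fs_props s b Hb) as [Hbnc [Hbl Hbh]]. specialize (Hbh ltac:(lia)).
  assert (Hhb : 1 <= hatF b) by (apply hatF_ge1; auto).
  assert (HL0 : 0 <= logphi (hatF b)) by (rewrite <- logphi_1; apply logphi_le; lra).
  assert (HL2 : logphi (hatF b) <= 2).
  { replace 2 with (logphi (phi * phi)) by (rewrite logphi_mult, logphi_phi by lra; ring).
    apply logphi_le. lra. apply hatF_le. }
  assert (HU : 0 <= logphi (hatF (btilde s b))).
  { destruct (classic (caseA s b)) as [HA|HB].
    - destruct (bt_caseA s b HA) as [Hbt _]. destruct (Fs_props s _ Hbt) as [_ [_ Hh]].
      rewrite <- logphi_1; apply logphi_le. lra. apply hatF_ge1. apply Hh. lia.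
    - rewrite (bt_caseB s b HB), hatF_special, logphi_phi by lia. lra. }
  assert (Hg : forall e, e > 0 -> exists N, forall n, (N <= n)%nat -> 0 <= g n < e).
  { intros e He.
    destruct (nat_above (1 + 4 * INR (s + 1) * 2 + 5 * INR (s + 1) * 2 / e)) as [R0 HR0].
    destruct (HKinf (R0 + fibF s + 3)%nat) as [N HN]. exists N. intros n Hn.
    specialize (HN n Hn).
    assert (HKr : INR (R0 + fibF s + 3) <= INR (K n)) by (apply le_INR; auto).
    rewrite !plus_INR in HKr. pose proof (pos_INR (fibF s)). simpl (INR 3) in HKr.
    assert (Hs1 : 0 < INR (s + 1)) by (apply lt_0_INR; lia).
    assert (Hd : 0 <= 5 * INR (s + 1) * 2 / e) by (apply Rlt_le, Rdiv_lt_0_compat; lra).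
    assert (HK1 : INR (K n) - 1 > 0) by lra.
    assert (He1 : 0 <= eps n).
    { unfold eps. apply Rlt_le, Rdiv_lt_0_compat. nra. lra. }
    assert (He2 : eps n <= 1/4).
    { unfold eps. unfold Rdiv. apply Rmult_le_reg_r with (INR (K n) - 1). lra.
      rewrite Rmult_assoc, Rinv_l by lra. nra. }
    assert (He3 : 5 * eps n < e).
    { unfold eps. unfold Rdiv.
      assert (5 * INR (s + 1) * 2 / e < INR (K n) - 1) by lra.
      unfold Rdiv in H0. apply Rmult_lt_compat_r with (r := e) in H0; auto.
      rewrite Rmult_assoc, Rinv_l in H0 by lra.
      apply Rmult_lt_reg_r with (INR (K n) - 1). lra.
      replace (5 * (INR (s + 1) * phi * / (INR (K n) - 1)) * (INR (K n) - 1))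
        with (5 * INR (s + 1) * phi) by (field; lra). nra. }
    assert (Hgood : good n).
    { split. lia. split. lia. auto. }
    unfold g. destruct (excluded_middle_informative (good n)) as [_|NG]; [|contradiction].
    pose proof (neg_log_bound (eps n) ltac:(lra)). lra. }
  assert (Hg0 : forall n, 0 <= g n).
  { intros n. unfold g. destruct (excluded_middle_informative (good n)) as [[_ [G3 G]]|]; [|lra].
    assert (0 <= eps n). { unfold eps. apply Rlt_le, Rdiv_lt_0_compat.
      apply Rmult_lt_0_compat. apply lt_0_INR; lia. lra.
      assert (3 <= INR (K n)) by (replace 3 with (INR 3) by (simpl; lra); apply le_INR; lia). lra. }
    apply neg_log_bound. lra. }
  exists gamma, gammat. split; [|split; [|split]].
  - intros e He. destruct (Hg e He) as [N HN]. exists N. intros n Hn.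
    unfold R_dist. rewrite Rminus_0_r. specialize (HN n Hn).
    unfold gamma. destruct (excluded_middle_informative (LB s (K n) b)).
    + rewrite Rabs_Ropp, Rabs_right; lra.
    + rewrite Rabs_right; lra.
  - intros e He. destruct (Hg e He) as [N HN]. exists N. intros n Hn.
    unfold R_dist. rewrite Rminus_0_r. specialize (HN n Hn).
    unfold gammat. destruct (excluded_middle_informative (caseA s b)); [destruct (excluded_middle_informative (LB s (K n) b))|].
    + rewrite Rabs_right; lra.
    + rewrite Rabs_Ropp, Rabs_right; lra.
    + rewrite Rabs_R0; lra.
  - intros [_ Hlarge] n. unfold gammat.
    destruct (excluded_middle_informative (caseA s b)) as [[c [Hc Hw]]|]; auto.
    specialize (Hlarge c Hc). lia.
  - intros n.
    set (x := frakF_inv (INR (K n))).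
    pose proof (base_fp x) as [Hf0 Hf1].
    destruct (excluded_middle_informative (good n)) as [G|NG].
    + assert (Hgn : g n = - logphi (1 - eps n)).
      { unfold g. destruct (excluded_middle_informative (good n)); [auto|contradiction]. }
      destruct G as [G1 [G2 G3]].
      destruct (fib_bracket (K n) ltac:(specialize (HKpos n); lia)) as [M [HM1 HM]].
      assert (HMs : (s <= M)%nat).
      { destruct (Nat.le_gt_cases s M) as [|Hlt]; auto. pose proof (fib_mono (S M) s Hlt). lia. }
      destruct (x_range (K n) M G2 ltac:(lia) HM) as [_ [_ Hfrac]]. fold x in Hfrac.
      set (m := (M - s)%nat). assert (HMm : M = (s + m)%nat) by lia.
      destruct (core (K n) M m s b (eps n) G2 ltac:(lia) HM HMm Hbl Hhb eq_refl G3) as [Cb1 Cb2].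
      fold x in Cb1, Cb2.
      split.
      * intros HLB. unfold gamma, gammat.
        destruct (excluded_middle_informative (LB s (K n) b)) as [_|NL]; [|contradiction].
        destruct (LB_interval s (K n) b HLB) as [m' [Hint Hbr]].
        assert (M = (s + m')%nat) by (apply bracket_unique with (K n); auto).
        assert (m' = m) by lia. subst m'.
        rewrite Hfrac. split.
        -- specialize (Cb1 ltac:(lia)). lra.
        -- destruct (excluded_middle_informative (caseA s b)) as [HA|HB].
           ++ destruct (bt_caseA s b HA) as [Hbt Hwbt]. destruct (Fs_props s _ Hbt) as [Hbtnc [Hbtl Hbth]].
              pose proof ((proj1 (succ_overflow s)) b (btilde s b) Hbnc Hbtnc Hbl Hbtl Hwbt m) as Hsucc.
              destruct (core (K n) M m s (btilde s b) (eps n) G2 ltac:(lia) HM HMm Hbtl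
                (hatF_ge1 _ (Hbth ltac:(lia))) eq_refl G3) as [Ct1 Ct2].
              fold x in Ct1, Ct2.
              specialize (Ct2 ltac:(lia)). lra.
           ++ rewrite (bt_caseB s b HB), hatF_special, logphi_phi by lia. rewrite <- Hfrac. lra.
      * intros [Hlow Hup]. unfold gamma, gammat in *.
        destruct (excluded_middle_informative (LB s (K n) b)) as [HLB|NL]; auto. exfalso.
        assert (Hnot : ~ (V m b <= K n < V m b + tau b m)%nat).
        { intro. apply NL. apply interval_LB with m; auto. lia. }
        rewrite Hfrac in Hlow, Hup.
        destruct (Nat.lt_ge_cases (K n) (V m b)) as [Hlt|Hge].
        -- specialize (Cb2 Hlt). lra.
        -- assert (Hge2 : (V m b + tau b m <= K n)%nat) by lia.
           destruct (excluded_middle_informative (caseA s b)) as [HA|HB].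
           ++ destruct (bt_caseA s b HA) as [Hbt Hwbt]. destruct (Fs_props s _ Hbt) as [Hbtnc [Hbtl Hbth]].
              pose proof ((proj1 (succ_overflow s)) b (btilde s b) Hbnc Hbtnc Hbl Hbtl Hwbt m) as Hsucc.
              destruct (core (K n) M m s (btilde s b) (eps n) G2 ltac:(lia) HM HMm Hbtl
                (hatF_ge1 _ (Hbth ltac:(lia))) eq_refl G3) as [Ct1 Ct2].
              fold x in Ct1, Ct2.
              specialize (Ct1 ltac:(lia)). lra.
           ++ pose proof ((proj2 (succ_overflow s)) b Hbnc Hbl (caseB_overflow s b Hs Hb HB) m) as Hov.
              rewrite <- HMm in Hov. lia.
    + assert (Hgn : g n = 2).
      { unfold g. destruct (excluded_middle_informative (good n)); [contradiction|auto]. }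
      split.
      * intros HLB. unfold gamma, gammat.
        destruct (excluded_middle_informative (LB s (K n) b)) as [_|NL]; [|contradiction].
        split. lra.
        destruct (excluded_middle_informative (caseA s b)) as [HA|HB]. lra.
        rewrite (bt_caseB s b HB), hatF_special, logphi_phi by lia. lra.
      * intros [Hlow _]. unfold gamma in Hlow.
        destruct (excluded_middle_informative (LB s (K n) b)); auto. lra.
Qed.
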